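(* If a natural number $m$ occurs twice in $(a(n))_{n\ge0}$, say $a(x)=a(y)=m$ with $x<y$, then $y=x+1$.
   Context: $\mathbb{N}=\{0,1,2,\ldots\}$. Let $(F_n)_{n\ge 0}$ be the Fibonacci numbers: $F_0=0$, $F_1=1$, $F_n=F_{n-1}+F_{n-2}$ for $n\ge 2$. Define $(a(n))_{n\ge 0}$ (OEIS A105774) by $a(0)=0$, $a(1)=1$, and for $n\ge 2$, $a(n)=F_{j+1}-a(n-F_j)$, where $j\ge 2$ is the unique index with $F_j<n\le F_{j+1}$. *)

(* Defs.v *)
From Stdlib Require Import Arith List.
Import ListNotations.

Fixpoint fib (n : nat) : nat :=
  match n with
  | 0 => 0
  | S m => match m with
           | 0 => 1
           | S k => fib m + fib k
           end
  end.

(* For n >= 2, fidx n is the unique j >= 2 with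
   F j < n <= F (j+1) (F is strictly increasing from index 2 on, F 2 = 1 < n). *)
Fixpoint fidx_from (k j n : nat) : nat :=
  match k with
  | 0 => j
  | S k' => if n <=? fib (S j) then j else fidx_from k' (S j) n
  end.

Definition fidx (n : nat) : nat := fidx_from n 2 n.

(* a with fuel: for n >= 2, a n = F (j+1) - a (n - F j); the argument
   n - F j is strictly smaller than n, so fuel n suffices. *)
Fixpoint a_fuel (fuel n : nat) : nat :=
  match fuel with
  | 0 => 0
  | S f =>
    match n with
    | 0 => 0
    | 1 => 1
    | _ => let j := fidx n in fib (S j) - a_fuel f (n - fib j)
    end
  end.

(* OEIS A105774 *)
Definition a (n : nat) : nat := a_fuel n n.

Example a_values :
  map a (seq 0 16) = [0;1;1;2;4;4;7;7;6;12;12;11;9;9;20;20].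
Proof. vm_compute. reflexivity. Qed.

(* Main.v *)
Require Import Defs.
From Stdlib Require Import Arith Lia.

Lemma fib_SS k : fib (S (S k)) = fib (S k) + fib k.
Proof. reflexivity. Qed.

Lemma fib_pos k : 1 <= fib (S k).
Proof.
  assert (H : forall k, 1 <= fib (S k) /\ 1 <= fib (S (S k))).
  { induction k0 as [|k0 [H1 H2]]; [simpl; lia|]. split; [lia|].
    rewrite fib_SS; lia. }
  apply H.
Qed.

Lemma fib_grow n : S n <= fib (S (S n)).
Proof.
  assert (H : forall n, S n <= fib (S (S n)) /\ S (S n) <= fib (S (S (S n)))).
  { induction n0 as [|n0 [H1 H2]]; [simpl; lia|]. split; [lia|].
    rewrite (fib_SS (S (S n0))). lia. }
  apply H.
Qed.

Lemma fib_mono i j : i <= j -> fib i <= fib j.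
Proof.
  induction 1; [lia|]. destruct m; [simpl in *; lia|].
  rewrite fib_SS; lia.
Qed.

Lemma fib_lt_idx i j : fib i < fib j -> i < j.
Proof.
  intros H. destruct (Nat.lt_ge_cases i j); [auto|].
  apply fib_mono in H0; lia.
Qed.

Lemma fidx_from_spec : forall k j n, fib j < n -> n <= fib (S j + k) ->
  j <= fidx_from k j n /\ fib (fidx_from k j n) < n /\ n <= fib (S (fidx_from k j n)).
Proof.
  induction k as [|k IH]; intros j n H1 H2; cbn [fidx_from].
  - rewrite Nat.add_0_r in H2. lia.
  - destruct (n <=? fib (S j)) eqn:E.
    + apply Nat.leb_le in E. lia.
    + apply Nat.leb_gt in E.
      destruct (IH (S j) n E) as [A [B C]].
      { replace (S (S j) + k) with (S j + S k) by lia. exact H2. }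
      lia.
Qed.

Lemma fidx_spec n : 2 <= n ->
  2 <= fidx n /\ fib (fidx n) < n /\ n <= fib (S (fidx n)).
Proof.
  intros Hn. unfold fidx. apply fidx_from_spec.
  - simpl; lia.
  - pose proof (fib_grow n). pose proof (fib_mono (S (S n)) (S 2 + n) ltac:(lia)). lia.
Qed.

Lemma a_fuel_indep : forall f g n, n <= f -> n <= g -> a_fuel f n = a_fuel g n.
Proof.
  induction f as [|f IH]; intros g n H1 H2.
  - assert (n = 0) by lia. subst. destruct g; reflexivity.
  - destruct g as [|g]; [assert (n = 0) by lia; subst; reflexivity|].
    destruct n as [|[|n']]; try reflexivity.
    cbn [a_fuel].
    destruct (fidx_spec (S (S n'))) as [A [B C]]; [lia|].
    pose proof (fib_mono 2 _ A). simpl in H.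
    rewrite (IH g); [reflexivity| lia | lia].
Qed.

Lemma a_rec n : 2 <= n -> a n = fib (S (fidx n)) - a (n - fib (fidx n)).
Proof.
  intros Hn. unfold a.
  destruct n as [|[|n']]; try lia.
  change (a_fuel (S (S n')) (S (S n'))) with (fib (S (fidx (S (S n')))) - a_fuel (S n') (S (S n') - fib (fidx (S (S n'))))).
  destruct (fidx_spec (S (S n'))) as [A [B C]]; [lia|].
  pose proof (fib_mono 2 _ A). simpl in H.
  rewrite (a_fuel_indep (S n') (S (S n') - fib (fidx (S (S n'))))); [reflexivity|lia|lia].
Qed.

Lemma a0 : a 0 = 0. Proof. reflexivity. Qed.
Lemma a1 : a 1 = 1. Proof. reflexivity. Qed.

Lemma a_range : forall n, 2 <= n -> fib (fidx n) <= a n < fib (S (fidx n)).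
Proof.
  induction n as [n IH] using (well_founded_induction lt_wf).
  intros Hn.
  destruct (fidx_spec n Hn) as [A [B C]].
  rewrite (a_rec n Hn).
  set (j := fidx n) in *.
  destruct j as [|[|j0]]; try lia.
  pose proof (fib_SS (S j0)) as FS.
  set (k := n - fib (S (S j0))).
  assert (Hk : 1 <= k <= fib (S j0)) by (unfold k; lia).
  assert (Hak : 1 <= a k <= fib (S j0)).
  { destruct (Nat.eq_dec k 1) as [E|E].
    - rewrite E, a1. pose proof (fib_pos j0). lia.
    - destruct (fidx_spec k) as [A' [B' C']]; [lia|].
      destruct (IH k) as [D1 D2]; [unfold k; pose proof (fib_pos (S j0)); lia | lia |].
      assert (fidx k < S j0) by (apply fib_lt_idx; lia).
      pose proof (fib_mono (S (fidx k)) (S j0)).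
      pose proof (fib_mono 2 (fidx k) A'). simpl in H1. lia. }
  pose proof (fib_SS j0). lia.
Qed.

Lemma fidx_mono x y : 2 <= x -> x <= y -> fidx x <= fidx y.
Proof.
  intros Hx Hxy.
  destruct (fidx_spec x) as [A [B C]]; [lia|].
  destruct (fidx_spec y) as [A' [B' C']]; [lia|].
  destruct (Nat.le_gt_cases (fidx x) (fidx y)); [auto|].
  pose proof (fib_mono (S (fidx y)) (fidx x)). lia.
Qed.

Theorem proposition2 :
  forall m x y : nat, a x = m -> a y = m -> x < y -> y = x + 1.
Proof.
  intros m x y Hx Hy Hxy. rewrite <- Hy in Hx. clear Hy m. revert x Hx Hxy.
  induction y as [y IH] using (well_founded_induction lt_wf).
  intros x Hx Hxy.
  destruct (Nat.lt_ge_cases y 2) as [Hy|Hy].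
  { destruct y as [|[|]]; try lia; assert (x = 0) by lia; subst;
    rewrite a0, a1 in Hx; lia. }
  destruct (fidx_spec y Hy) as [A [B C]].
  destruct (a_range y Hy) as [D1 D2].
  pose proof (fib_mono 2 _ A) as F2. simpl in F2.
  destruct (Nat.lt_ge_cases x 2) as [Hx2|Hx2].
  { destruct x as [|[|]]; try lia.
    - rewrite a0 in Hx. lia.
    - rewrite a1 in Hx.
      destruct (Nat.eq_dec (fidx y) 2) as [E|E].
      + rewrite E in C. simpl in C. lia.
      + pose proof (fib_mono 3 _ (ltac:(lia) : 3 <= fidx y)). simpl in H. lia. }
  pose proof (fidx_mono x y Hx2 ltac:(lia)) as M.
  destruct (fidx_spec x Hx2) as [A' [B' C']].
  destruct (a_range x Hx2) as [E1 E2].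
  destruct (Nat.lt_ge_cases (fidx x) (fidx y)) as [L|L].
  - pose proof (fib_mono (S (fidx x)) (fidx y) L). lia.
  - assert (Ej : fidx x = fidx y) by lia.
    pose proof (a_rec x Hx2) as Rx. pose proof (a_rec y Hy) as Ry.
    rewrite Ej in Rx, B'.
    assert (Heq : a (x - fib (fidx y)) = a (y - fib (fidx y))) by lia.
    pose proof (IH (y - fib (fidx y)) ltac:(lia) (x - fib (fidx y)) Heq ltac:(lia)).
    lia.
Qed.
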